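(* Let $k,l\ge1$ with $k\ne l$ and $1\le r\le 4kl$. Let $\overline{\mathcal{B}}(2k,2l;r)$ be the subset of $\mathcal{B}(2k,2l;r)$ consisting of boards whose board partition $(\lambda_1,\lambda_2,\lambda_3,\lambda_4)$ satisfies: (i) $\lambda_1\ge\lambda_i$ for all $i>1$; (ii) if $\lambda_1=\lambda_2$ then $\lambda_3\ge\lambda_4$; (iii) if $\lambda_1=\lambda_3$ then $\lambda_2\ge\lambda_4$; (iv) if $\lambda_1=\lambda_4$ then $\lambda_2\ge\lambda_3$. Then: (1) $\overline{\mathcal{B}}(2k,2l;r)$ is a disjoint union of sets each consisting of all boards in $\mathcal{B}(2k,2l;r)$ with some fixed board partition; (2) every board of $\mathcal{B}(2k,2l;r)$ is equivalent under $\langle H,V\rangle$ to some board of $\overline{\mathcal{B}}(2k,2l;r)$; (3) if two boards of $\overline{\mathcal{B}}(2k,2l;r)$ are equivalent under $\langle H,V\rangle$, they have the same board partition.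
   Context: A $2k\times 2l$ grid ($2k$ rows numbered top to bottom, $2l$ columns numbered left to right) of unit cells; $\mathcal{B}(2k,2l;r)$ is the set of boards, i.e. subsets of exactly $r$ blocked cells. The symmetry group is $\langle H,V\rangle=\{R_0,H,V,R_{180}\}$, where $H$ is reflection across the horizontal midline, $V$ reflection across the vertical midline, $R_{180}$ rotation by 180 degrees; boards are equivalent if some element maps one to the other. The grid is divided into four $k\times l$ quadrants: $Q_1$ = rows $1..k$, cols $1..l$; $Q_2$ = rows $1..k$, cols $l+1..2l$; $Q_3$ = rows $k+1..2k$, cols $l+1..2l$; $Q_4$ = rows $k+1..2k$, cols $1..l$. The board partition is $(\lambda_1,\lambda_2,\lambda_3,\lambda_4)$ with $\lambda_i$ the number of blocked cells in $Q_i$. *)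

(* Defs.v *)
From mathcomp Require Import all_boot.
Set Implicit Arguments. Unset Strict Implicit. Unset Printing Implicit Defensive.

(* Cells of the 2k x 2l grid: (row, column), 0-indexed
   (row i here = row i+1 of the paper, rows numbered top to bottom). *)
Definition cell (k l : nat) := ('I_(2 * k) * 'I_(2 * l))%type.
Definition board (k l : nat) := {set cell k l}.

(* B(2k,2l;r): boards with exactly r blocked cells *)
Definition boards (k l r : nat) : {set board k l} := [set B : board k l | #|B| == r].

Inductive sym := R0 | Hsym | Vsym | R180.

Definition act_cell (k l : nat) (g : sym) (c : cell k l) : cell k l :=
  match g with
  | R0 => c
  | Hsym => (rev_ord c.1, c.2)
  | Vsym => (c.1, rev_ord c.2)
  | R180 => (rev_ord c.1, rev_ord c.2)
  end.

Definition act_board (k l : nat) (g : sym) (B : board k l) : board k l :=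
  [set act_cell g c | c in B].

Definition equivalent (k l : nat) (B B' : board k l) : Prop :=
  exists g : sym, act_board g B = B'.

Definition inQ1 (k l : nat) (c : cell k l) : bool := (c.1 < k) && (c.2 < l).
Definition inQ2 (k l : nat) (c : cell k l) : bool := (c.1 < k) && (l <= c.2).
Definition inQ3 (k l : nat) (c : cell k l) : bool := (k <= c.1) && (l <= c.2).
Definition inQ4 (k l : nat) (c : cell k l) : bool := (k <= c.1) && (c.2 < l).

Definition bpart (k l : nat) (B : board k l) : nat * nat * nat * nat :=
  (#|[set c in B | inQ1 c]|, #|[set c in B | inQ2 c]|,
   #|[set c in B | inQ3 c]|, #|[set c in B | inQ4 c]|).

Definition good_partition (p : nat * nat * nat * nat) : bool :=
  let: (l1, l2, l3, l4) := p in
  [&& (l2 <= l1), (l3 <= l1), (l4 <= l1),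
      (l1 == l2) ==> (l4 <= l3),
      (l1 == l3) ==> (l4 <= l2) &
      (l1 == l4) ==> (l3 <= l2)].

Definition Bbar (k l r : nat) : {set board k l} :=
  [set B in boards k l r | good_partition (bpart B)].

(* Main.v *)
Require Import Defs.
From mathcomp Require Import all_boot.
From mathcomp Require Import zify.

Definition act_part (g : sym) (p : nat * nat * nat * nat) : nat * nat * nat * nat :=
  let: (a, b, c, d) := p in
  match g with
  | R0 => (a, b, c, d)
  | Hsym => (d, c, b, a)
  | Vsym => (b, a, d, c)
  | R180 => (c, d, a, b)
  end.

Lemma act_cellK k l g : involutive (@act_cell k l g).
Proof. by case: g => -[x y] //=; rewrite ?rev_ordK. Qed.

Lemma card_sel k l g (B : board k l) (P : pred (cell k l)) :
  #|[set c in act_board g B | P c]| = #|[set c in B | P (act_cell g c)]|.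
Proof.
rewrite /act_board (can_imset_pre _ (@act_cellK k l g)).
rewrite -(card_preimset [set c in B | P (act_cell g c)] (can_inj (@act_cellK k l g))).
apply: eq_card => x; rewrite !inE act_cellK.
by [].
Qed.

Lemma bpart_act k l g (B : board k l) : bpart (act_board g B) = act_part g (bpart B).
Proof.
rewrite /bpart /act_part !card_sel.
case: g; congr (_, _, _, _); apply: eq_card => -[x y]; rewrite !inE /=;
  rewrite /inQ1 /inQ2 /inQ3 /inQ4 /=;
  have := ltn_ord x; have := ltn_ord y; (try by []); lia.
Qed.

Lemma goodex a b c d : [|| good_partition (a,b,c,d), good_partition (d,c,b,a), good_partition (b,a,d,c) | good_partition (c,d,a,b)].
Proof. rewrite /good_partition. lia. Qed.

Lemma good_uniq g p : good_partition p -> good_partition (act_part g p) -> act_part g p = p.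
Proof.
case: p => [[[a b] c] d]; case: g => //=; rewrite /good_partition => H1 H2.
- by have [-> ->] : d = a /\ c = b by lia.
- by have [-> ->] : b = a /\ d = c by lia.
- by have [-> ->] : c = a /\ d = b by lia.
Qed.

Theorem theorem4p5 (k l r : nat) :
  1 <= k -> 1 <= l -> k <> l -> 1 <= r -> r <= 4 * k * l ->
  (* (1) Bbar is the (disjoint) union of the full partition classes for a set P of partitions *)
  (exists P : pred (nat * nat * nat * nat),
      Bbar k l r = [set B in boards k l r | P (bpart B)]) /\
  (* (2) every board is equivalent to some board of Bbar *)
  (forall B : board k l, B \in boards k l r ->
      exists2 B' : board k l, B' \in Bbar k l r & equivalent B B') /\
  (* (3) equivalent boards of Bbar have the same partition *)
  (forall B B' : board k l, B \in Bbar k l r -> B' \in Bbar k l r ->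
      equivalent B B' -> bpart B = bpart B').
Proof.
move=> _ _ _ _ _; split; first by exists good_partition.
have card_act g (B : board k l) : #|act_board g B| = #|B|.
  by rewrite /act_board card_imset //; apply: can_inj (@act_cellK k l g).
split.
- move=> B; rewrite inE => HB.
  have := goodex (bpart B).1.1.1 (bpart B).1.1.2 (bpart B).1.2 (bpart B).2.
  have E g : good_partition (act_part g (bpart B)) -> exists2 B' : board k l, B' \in Bbar k l r & equivalent B B'.
    move=> Hg; exists (act_board g B); last by exists g.
    by rewrite !inE card_act HB bpart_act.
  case: (bpart B) E => [[[a b] c] d] /= E.
  case/or4P => H; [exact: (E R0) | exact: (E Hsym) | exact: (E Vsym) | exact: (E R180)].
- move=> B B'; rewrite !inE => /andP[_ HB] /andP[_ HB'] [g E]; subst B'.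
  rewrite bpart_act in HB' *; by rewrite good_uniq.
Qed.
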